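(* Let $\mathcal{C}$ be a d-category. A $\mathcal{C}$-language $L$ is regular if and only if (1) the sets $\mathrm{src}(L)$ and $\mathrm{tgt}(L)$ are finite, and (2) ${}_UL_V$ is regular for all $U\in\mathrm{src}(L)$ and $V\in\mathrm{tgt}(L)$.
   Context: A d-category is a small category $\mathcal{C}$ with wide subcategories $\mathcal{C}^+$ (formorphisms) and $\mathcal{C}^-$ (backmorphisms) such that an invertible $\varphi$ is in $\mathcal{C}^+$ iff $\varphi^{-1}\in\mathcal{C}^-$. A $\mathcal{C}$-automaton is a presheaf $X:\mathcal{C}^{op}\to\mathbf{Set}$ with sets of start and accept elements (elements are pairs $(U,x)$, $x\in X[U]$); morphisms preserve them. A linear category is a bipointed d-category isomorphic to a finite (possibly empty) concatenation (gluing $\top$ to $\bot$) of $\mathbf S$ (formorphism $\bot\to\top$), $\mathbf T$ (backmorphism $\top\to\bot$), $\mathbf I$ (inverse pair); a path is a d-functor $\omega:\mathcal I\to\mathcal{C}$ from one; its track object is $\operatorname{colim}_i\mathcal{C}(-,\omega(i))$ with single start element image of $\mathrm{id}_{\omega(\bot)}$ (lying over $\mathrm{src}=\omega(\bot)$) and single accept element image of $\mathrm{id}_{\omega(\top)}$ (over $\mathrm{tgt}=\omega(\top)$); track objects are automata isomorphic to such. $\Delta\sqsubseteq\Gamma$ if there is an automaton morphism $\Delta\to\Gamma$. A $\mathcal{C}$-language is a class of track objects down-closed under $\sqsubseteq$. $\mathrm{Lang}(X)$ is the class of track objects admitting an automaton morphism to $X$. A presheaf $X$ is finitely generated if $X\cong\operatorname{colim}_{e\in\mathcal{E}}\mathcal{C}(-,G(e))$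 for some finite category $\mathcal{E}$ and functor $G:\mathcal{E}\to\mathcal{C}$; an automaton has finite type if its presheaf is finitely generated and it has finitely many start and accept elements. $L$ is regular if $L=\mathrm{Lang}(X)$ for some finite-type automaton $X$. $\mathrm{src}(L)=\{\mathrm{src}\Gamma\mid\Gamma\in L\}$, $\mathrm{tgt}(L)=\{\mathrm{tgt}\Gamma\mid\Gamma\in L\}$, ${}_UL_V=\{\Gamma\in L\mid\mathrm{src}\Gamma=U,\mathrm{tgt}\Gamma=V\}$. *)

(* Defs.v *)
From Stdlib Require Import List Relations.

Record Category := {
  ob : Type;
  hom : ob -> ob -> Type;
  idm : forall a, hom a a;
  comp : forall x y z, hom y z -> hom x y -> hom x z;
  comp_id_l : forall a b (f : hom a b), comp a b b (idm b) f = f;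
  comp_id_r : forall a b (f : hom a b), comp a a b f (idm a) = f;
  comp_assoc : forall a b c d (f : hom a b) (g : hom b c) (h : hom c d),
      comp a c d h (comp a b c g f) = comp a b d (comp b c d h g) f }.
Arguments hom {_} _ _.
Arguments idm {_} _.
Arguments comp {_ x y z} _ _.

Record dCategory := {
  dcat :> Category;
  fwd : forall a b : ob dcat, hom a b -> Prop;
  bwd : forall a b : ob dcat, hom a b -> Prop;
  fwd_id : forall a, fwd a a (idm a);
  fwd_comp : forall a b c (f : hom a b) (g : hom b c),
      fwd a b f -> fwd b c g -> fwd a c (comp g f);
  bwd_id : forall a, bwd a a (idm a);
  bwd_comp : forall a b c (f : hom a b) (g : hom b c),
      bwd a b f -> bwd b c g -> bwd a c (comp g f);
  inv_ax : forall a b (f : hom a b) (g : hom b a),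
      comp g f = idm a -> comp f g = idm b -> (fwd a b f <-> bwd b a g) }.
Arguments fwd {d a b} _.
Arguments bwd {d a b} _.

Record Functor (E D : Category) := {
  fobj : ob E -> ob D;
  fmap : forall a b, @hom E a b -> @hom D (fobj a) (fobj b);
  fmap_id : forall a, fmap a a (idm a) = idm (fobj a);
  fmap_comp : forall a b c (f : @hom E a b) (g : @hom E b c),
      fmap a c (comp g f) = comp (fmap b c g) (fmap a b f) }.
Arguments fobj {E D} _ _.
Arguments fmap {E D} _ {a b} _.

Definition Finite (T : Type) : Prop := exists l : list T, forall x, In x l.
Definition FiniteSet {T : Type} (P : T -> Prop) : Prop :=
  exists l : list T, forall x, P x -> In x l.
Definition FiniteCategory (E : Category) : Prop :=
  Finite (ob E) /\ forall a b : ob E, Finite (@hom E a b).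

Section Automata.
Context (C : dCategory).

(* presheaves C^op -> Set (data; laws in is_presheaf) *)
Record PSh := {
  psh :> ob C -> Type;
  act : forall U V : ob C, hom U V -> psh V -> psh U }.
Arguments act _ {U V} _ _.

Definition is_presheaf (X : PSh) : Prop :=
  (forall U (x : X U), act X (idm U) x = x) /\
  (forall U V W (f : hom U V) (g : hom V W) (x : X W),
      act X (comp g f) x = act X f (act X g x)).

Record Automaton := {
  apsh :> PSh;
  start : forall U : ob C, apsh U -> Prop;
  accept : forall U : ob C, apsh U -> Prop }.

Definition amorphism (D G : Automaton) (f : forall U, D U -> G U) : Prop :=
  (forall U V (h : hom U V) (x : D V), f U (act D h x) = act G h (f V x)) /\
  (forall U x, start D U x -> start G U (f U x)) /\
  (forall U x, accept D U x -> accept G U (f U x)).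
Definition sqle (D G : Automaton) : Prop :=
  exists f : forall U, D U -> G U, amorphism D G f.

(* X is (isomorphic to) the colimit of the representables C(-, obj j), j valid,
   along the cocone xi (by Yoneda, xi j is the image of id_{obj j}), where the
   diagram is generated by the relation gen: the canonical map
   (j, f) |-> X(f)(xi j) is surjective and its kernel is the equivalence
   relation generated by gen. *)
Definition rep_colim (X : PSh) (J : Type) (valid : J -> Prop) (obj : J -> ob C)
  (gen : forall U, {j : J & hom U (obj j)} -> {j : J & hom U (obj j)} -> Prop)
  (xi : forall j, X (obj j)) : Prop :=
  (forall U (x : X U), exists j (f : hom U (obj j)), valid j /\ x = act X f (xi j)) /\
  (forall U (a b : {j : J & hom U (obj j)}), valid (projT1 a) -> valid (projT1 b) ->
     (act X (projT2 a) (xi (projT1 a)) = act X (projT2 b) (xi (projT1 b))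
        <-> clos_refl_sym_trans _ (gen U) a b)).

(* image of one generator S (formorphism), T (backmorphism) or I (inverse pair
   phi formorphism, psi = phi^-1 backmorphism) of a linear category *)
Inductive Step (A B : ob C) : Type :=
| StepS (phi : hom A B) : fwd phi -> Step A B
| StepT (psi : hom B A) : bwd psi -> Step A B
| StepI (phi : hom A B) (psi : hom B A) :
    comp psi phi = idm A -> comp phi psi = idm B -> fwd phi -> bwd psi -> Step A B.

(* a path = d-functor from the linear category with objects 0 (= bot), ..., plen (= top) *)
Record Path := {
  plen : nat;
  pob : nat -> ob C;
  pstep : forall k, k < plen -> Step (pob k) (pob (S k)) }.

Definition step_rel {U A B : ob C} (s : Step A B) (f : hom U A) (f' : hom U B) : Prop :=
  match s with
  | StepS _ _ phi _ => f' = comp phi f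
  | StepT _ _ psi _ => f = comp psi f'
  | StepI _ _ phi psi _ _ _ _ => f' = comp phi f \/ f = comp psi f'
  end.

Inductive path_gen (p : Path) (U : ob C) :
  {k : nat & hom U (pob p k)} -> {k : nat & hom U (pob p k)} -> Prop :=
| pg_step (k : nat) (H : k < plen p) (f : hom U (pob p k)) (f' : hom U (pob p (S k))) :
    step_rel (pstep p k H) f f' ->
    path_gen p U (existT (fun k => hom U (pob p k)) k f)
                 (existT (fun k => hom U (pob p k)) (S k) f').

Definition is_track_of (G : Automaton) (p : Path) : Prop :=
  is_presheaf G /\
  exists delta : forall k, G (pob p k),
    rep_colim G nat (fun k => k <= plen p) (pob p) (path_gen p) delta /\
    (forall U (x : G U), start G U x <->
        existT (fun V => G V) U x = existT (fun V => G V) (pob p 0) (act G (idm _) (delta 0))) /\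
    (forall U (x : G U), accept G U x <->
        existT (fun V => G V) U x =
        existT (fun V => G V) (pob p (plen p)) (act G (idm _) (delta (plen p)))).

Definition is_track (G : Automaton) : Prop := exists p : Path, is_track_of G p.

Definition is_language (L : Automaton -> Prop) : Prop :=
  (forall G, L G -> is_track G) /\
  (forall D G, is_track D -> sqle D G -> L G -> L D).

Definition Lang (X : Automaton) : Automaton -> Prop :=
  fun G => is_track G /\ sqle G X.

Definition fin_generated (X : PSh) : Prop :=
  exists (E : Category) (F : Functor E C), FiniteCategory E /\
  exists xi : forall e, X (fobj F e),
    rep_colim X (ob E) (fun _ => True) (fobj F)
      (fun U a b => exists alpha : @hom E (projT1 a) (projT1 b),
                      projT2 b = comp (fmap F alpha) (projT2 a)) xi.

Definition finite_type (X : Automaton) : Prop :=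
  is_presheaf X /\ fin_generated X /\
  FiniteSet (fun e : {U : ob C & X U} => start X (projT1 e) (projT2 e)) /\
  FiniteSet (fun e : {U : ob C & X U} => accept X (projT1 e) (projT2 e)).

Definition regular (L : Automaton -> Prop) : Prop :=
  exists X : Automaton, finite_type X /\ forall G, L G <-> Lang X G.

Definition src_set (L : Automaton -> Prop) (U : ob C) : Prop :=
  exists G, L G /\ exists x : G U, start G U x.
Definition tgt_set (L : Automaton -> Prop) (V : ob C) : Prop :=
  exists G, L G /\ exists y : G V, accept G V y.
Definition sub_lang (L : Automaton -> Prop) (U V : ob C) : Automaton -> Prop :=
  fun G => L G /\ (exists x : G U, start G U x) /\ (exists y : G V, accept G V y).

End Automata.

(* Main.v *)
Require Import Defs.
From Stdlib Require Import List Relations Classical Arith Lia.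

Section S.
Context (C : dCategory).

Lemma step_witness A B (s : Step C A B) :
  exists U (f : hom U A) (f' : hom U B), step_rel C s f f'.
Proof.
  destruct s as [phi Hp | psi Hp | phi psi e1 e2 Hp Hq]; simpl.
  - exists A, (idm A), phi. rewrite comp_id_r. reflexivity.
  - exists B, psi, (idm B). rewrite comp_id_r. reflexivity.
  - exists A, (idm A), phi. left. rewrite comp_id_r. reflexivity.
Qed.

Lemma track_const (G : Automaton C) (p : Path C) :
  is_track_of C G p ->
  forall sd : forall U, G U -> bool,
  (forall U V h x, sd U (act C G U V h x) = sd V x) ->
  forall U x W y, sd U x = sd W y.
Proof.
  intros [_ [delta [[Hs Hk] _]]] sd Hinv.
  assert (c1 : forall k, k <= plen C p -> sd _ (delta k) = sd _ (delta 0)).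
  { induction k as [|k IH]; intros Hle; [reflexivity|].
    assert (Hlt : k < plen C p) by exact Hle.
    destruct (step_witness _ _ (pstep C p k Hlt)) as [U [f [f' Hr]]].
    pose proof (pg_step C p U k Hlt f f' Hr) as Hg.
    pose proof (proj2 (Hk U (existT _ k f) (existT _ (S k) f')
                  (Nat.lt_le_incl _ _ Hlt) Hle) (rst_step _ _ _ _ Hg)) as E.
    simpl in E.
    rewrite <- (Hinv _ _ f' (delta (S k))), <- E, Hinv. apply IH.
    apply Nat.lt_le_incl; exact Hlt. }
  assert (c2 : forall U x, sd U x = sd _ (delta 0)).
  { intros U x. destruct (Hs U x) as [j [f [Hv ->]]]. rewrite Hinv. apply c1; exact Hv. }
  intros. rewrite c2, (c2 W y). reflexivity.
Qed.

Lemma track_start (G : Automaton C) : is_track C G ->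
  exists W (x : G W), start C G W x /\ forall W' x', start C G W' x' -> W' = W.
Proof.
  intros [p [_ [delta [_ [Hs _]]]]].
  exists (pob C p 0), (act C G _ _ (idm _) (delta 0)). split.
  - apply Hs. reflexivity.
  - intros W' x' H. apply Hs in H. apply (f_equal (@projT1 _ _)) in H. exact H.
Qed.

Lemma track_accept (G : Automaton C) : is_track C G ->
  exists W (x : G W), accept C G W x /\ forall W' x', accept C G W' x' -> W' = W.
Proof.
  intros [p [_ [delta [_ [_ Hs]]]]].
  exists (pob C p (plen C p)), (act C G _ _ (idm _) (delta (plen C p))). split.
  - apply Hs. reflexivity.
  - intros W' x' H. apply Hs in H. apply (f_equal (@projT1 _ _)) in H. exact H.
Qed.


Definition EmptyCat : Category.
Proof.
  refine {| ob := Empty_set; hom := fun _ _ => Empty_set;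
            idm := fun a => match a with end;
            comp := fun x y z g f => match f with end |}.
  - intros a; destruct a.
  - intros a; destruct a.
  - intros a; destruct a.
Defined.

Definition EmptyF : Functor EmptyCat (dcat C).
Proof.
  unshelve refine (Build_Functor EmptyCat (dcat C) (fun a : Empty_set => match a with end) _ _ _).
  - intros a; destruct a.
  - intros a; destruct a.
  - intros a; destruct a.
Defined.

Definition EmptyA : Automaton C :=
  {| apsh := {| psh := fun _ => Empty_set; act := fun U V h x => x |};
     start := fun _ _ => False; accept := fun _ _ => False |}.

Lemma EmptyA_ft : finite_type C EmptyA.
Proof.
  split; [|split; [|split]].
  - split; intros; simpl in *; contradiction.
  - exists EmptyCat, EmptyF. split.
    + split; [exists nil; intros x; destruct x| intros a; destruct a].
    + unshelve eexists; [intros e; destruct e|]. split.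
      * intros U x; destruct x.
      * intros U [a fa]; destruct a.
  - exists nil; intros x H; destruct H.
  - exists nil; intros x H; destruct H.
Qed.

Lemma EmptyA_lang G : ~ Lang C EmptyA G.
Proof.
  intros [Ht [f _]]. destruct (track_start G Ht) as [W [x _]]. destruct (f W x).
Qed.


Section Sum.
Context (D1 D2 : Category).

Definition shom (a b : ob D1 + ob D2) : Type :=
  match a, b with
  | inl a, inl b => @hom D1 a b
  | inr a, inr b => @hom D2 a b
  | _, _ => Empty_set
  end.

Definition sidm (a : ob D1 + ob D2) : shom a a :=
  match a with inl a => idm a | inr a => idm a end.

Definition scomp (x y z : ob D1 + ob D2) : shom y z -> shom x y -> shom x z.
Proof.
  destruct x as [x|x], y as [y|y], z as [z|z]; simpl; intros g f;
    first [exact (comp g f) | destruct g | destruct f].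
Defined.

Definition SumCat : Category.
Proof.
  refine {| ob := ob D1 + ob D2; hom := shom; idm := sidm; comp := scomp |}.
  - intros [a|a] [b|b] f; simpl in *; try destruct f; apply comp_id_l.
  - intros [a|a] [b|b] f; simpl in *; try destruct f; apply comp_id_r.
  - intros [a|a] [b|b] [c|c] [d|d] f g h; simpl in *;
      try destruct f; try destruct g; try destruct h; apply comp_assoc.
Defined.

Context (F1 : Functor D1 (dcat C)) (F2 : Functor D2 (dcat C)).

Definition sfobj (a : ob SumCat) : ob C :=
  match a with inl a => fobj F1 a | inr a => fobj F2 a end.

Definition sfmap (a b : ob SumCat) : @hom SumCat a b -> hom (sfobj a) (sfobj b).
Proof.
  destruct a as [a|a], b as [b|b]; simpl; intros f;
    first [exact (fmap F1 f) | exact (fmap F2 f) | destruct f].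
Defined.

Definition SumF : Functor SumCat (dcat C).
Proof.
  refine (Build_Functor SumCat (dcat C) sfobj sfmap _ _).
  - intros [a|a]; simpl; apply fmap_id.
  - intros [a|a] [b|b] [c|c] f g; simpl in *;
      try destruct f; try destruct g; apply fmap_comp.
Defined.

End Sum.

Lemma crst_map {A B} (R : relation A) (R' : relation B) (g : A -> B) :
  (forall x y, R x y -> R' (g x) (g y)) ->
  forall x y, clos_refl_sym_trans _ R x y -> clos_refl_sym_trans _ R' (g x) (g y).
Proof.
  intros Hg x y H; induction H.
  - apply rst_step; auto.
  - apply rst_refl.
  - apply rst_sym; auto.
  - eapply rst_trans; eauto.
Qed.

Definition SumP (X Y : PSh C) : PSh C :=
  {| psh := fun U => (X U + Y U)%type;
     act := fun U V h s => match s with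
                           | inl x => inl (act C X U V h x)
                           | inr y => inr (act C Y U V h y) end |}.

Definition SumA (X Y : Automaton C) : Automaton C :=
  {| apsh := SumP X Y;
     start := fun U s => match s with inl x => start C X U x | inr y => start C Y U y end;
     accept := fun U s => match s with inl x => accept C X U x | inr y => accept C Y U y end |}.

Lemma SumP_fg (X Y : PSh C) : fin_generated C X -> fin_generated C Y ->
  fin_generated C (SumP X Y).
Proof.
  intros [E1 [F1 [[[l1 Ho1] Fh1] [xi1 [Hs1 Hk1]]]]] [E2 [F2 [[[l2 Ho2] Fh2] [xi2 [Hs2 Hk2]]]]].
  exists (SumCat E1 E2), (SumF E1 E2 F1 F2). split.
  - split.
    + exists (map inl l1 ++ map inr l2). intros [a|a]; apply in_or_app;
        [left|right]; apply in_map; auto.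
    + intros [a|a] [b|b]; simpl;
        first [apply Fh1 | apply Fh2 | exists nil; intros []].
  - unshelve eexists.
    { intros [e|e]; [exact (inl (xi1 e)) | exact (inr (xi2 e))]. }
    split.
    + intros U [x|x].
      * destruct (Hs1 U x) as [e [f [_ ->]]]. exists (inl e), f. split; [exact I|reflexivity].
      * destruct (Hs2 U x) as [e [f [_ ->]]]. exists (inr e), f. split; [exact I|reflexivity].
    + intros U a b _ _. split.
      * destruct a as [[a|a] fa], b as [[b|b] fb]; simpl; intros E; try discriminate E;
          injection E as E.
        -- apply (Hk1 U (existT _ a fa) (existT _ b fb) I I) in E.
           refine (crst_map _ _ (fun p => existT (fun j => hom U (sfobj E1 E2 F1 F2 j))
                                      (inl (projT1 p)) (projT2 p)) _ _ _ E).
           intros [x fx] [y fy] [alpha Ha]. exists alpha. exact Ha.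
        -- apply (Hk2 U (existT _ a fa) (existT _ b fb) I I) in E.
           refine (crst_map _ _ (fun p => existT (fun j => hom U (sfobj E1 E2 F1 F2 j))
                                      (inr (projT1 p)) (projT2 p)) _ _ _ E).
           intros [x fx] [y fy] [alpha Ha]. exists alpha. exact Ha.
      * intros H; induction H as [a b H| | |].
        -- destruct a as [[a|a] fa], b as [[b|b] fb]; destruct H as [alpha Ha];
             simpl in alpha; try destruct alpha; simpl; f_equal.
           ++ apply (Hk1 U (existT _ a fa) (existT _ b fb) I I).
              apply rst_step. exists alpha. exact Ha.
           ++ apply (Hk2 U (existT _ a fa) (existT _ b fb) I I).
              apply rst_step. exists alpha. exact Ha.
        -- reflexivity.
        -- symmetry; assumption.
        -- etransitivity; eassumption.
Qed.

Lemma SumA_fin (X Y : Automaton C) (PX : forall U, X U -> Prop) (PY : forall U, Y U -> Prop) :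
  FiniteSet (fun e : {U : ob C & X U} => PX (projT1 e) (projT2 e)) ->
  FiniteSet (fun e : {U : ob C & Y U} => PY (projT1 e) (projT2 e)) ->
  FiniteSet (fun e : {U : ob C & SumA X Y U} =>
     match projT2 e with inl x => PX _ x | inr y => PY _ y end).
Proof.
  intros [sx Hsx] [sy Hsy].
  exists (map (fun e : {U : ob C & X U} =>
                   existT (fun U => SumA X Y U) (projT1 e) (inl (projT2 e))) sx ++
            map (fun e : {U : ob C & Y U} =>
                   existT (fun U => SumA X Y U) (projT1 e) (inr (projT2 e))) sy).
  intros [U [x|x]] H; apply in_or_app; [left|right].
  - apply (in_map (fun e : {U : ob C & X U} =>
                   existT (fun U => SumA X Y U) (projT1 e) (inl (projT2 e))) sx (existT _ U x)).
    apply Hsx; exact H.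
  - apply (in_map (fun e : {U : ob C & Y U} =>
                   existT (fun U => SumA X Y U) (projT1 e) (inr (projT2 e))) sy (existT _ U x)).
    apply Hsy; exact H.
Qed.

Lemma SumA_ft X Y : finite_type C X -> finite_type C Y -> finite_type C (SumA X Y).
Proof.
  intros [[HX1 HX2] [HXg [HXs HXa]]] [[HY1 HY2] [HYg [HYs HYa]]].
  split; [|split; [|split]].
  - split.
    + intros U [x|x]; simpl; f_equal; auto.
    + intros U V W f g [x|x]; simpl; f_equal; auto.
  - apply SumP_fg; auto.
  - exact (SumA_fin X Y _ _ HXs HYs).
  - exact (SumA_fin X Y _ _ HXa HYa).
Qed.

Definition isL {A B : Type} (s : A + B) : bool := match s with inl _ => true | inr _ => false end.
Definition getL {A B : Type} (s : A + B) : isL s = true -> A :=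
  match s as s0 return isL s0 = true -> A with
  | inl a => fun _ => a
  | inr _ => fun H => match Bool.diff_false_true H with end end.
Definition getR {A B : Type} (s : A + B) : isL s = false -> B :=
  match s as s0 return isL s0 = false -> B with
  | inr b => fun _ => b
  | inl _ => fun H => match Bool.diff_true_false H with end end.
Lemma getL_spec {A B} (s : A + B) H : s = inl (getL s H).
Proof. destruct s; [reflexivity | discriminate H]. Qed.
Lemma getR_spec {A B} (s : A + B) H : s = inr (getR s H).
Proof. destruct s; [discriminate H | reflexivity]. Qed.

Lemma getL_eq {A B} (s : A + B) H a : s = inl a -> getL s H = a.
Proof. intros E; destruct s; [injection E; auto | discriminate E]. Qed.
Lemma getR_eq {A B} (s : A + B) H a : s = inr a -> getR s H = a.
Proof. intros E; destruct s; [discriminate E | injection E; auto]. Qed.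

Lemma SumA_lang X Y G : Lang C (SumA X Y) G <-> Lang C X G \/ Lang C Y G.
Proof.
  split.
  - intros [Ht [f [Hf1 [Hf2 Hf3]]]].
    pose proof Ht as [p Hp].
    assert (Hc := track_const G p Hp (fun U x => isL (f U x))).
    assert (Hinv : forall U V h x, isL (f U (act C G U V h x)) = isL (f V x)).
    { intros. rewrite Hf1. destruct (f V x); reflexivity. }
    specialize (Hc Hinv).
    destruct (track_start G Ht) as [W [x0 _]].
    case_eq (isL (f W x0)); intros Hb.
    + left. split; [exact Ht|].
      assert (Hall : forall U x, isL (f U x) = true) by (intros; rewrite (Hc U x W x0); exact Hb).
      exists (fun U x => getL (f U x) (Hall U x)). split; [|split].
      * intros U V h x.
        apply getL_eq. rewrite Hf1.
        pose proof (getL_spec (f V x) (Hall V x)) as E.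
        set (a := getL (f V x) (Hall V x)) in *. clearbody a.
        rewrite E. reflexivity.
      * intros U x Hs. apply Hf2 in Hs.
        rewrite (getL_spec (f U x) (Hall U x)) in Hs. exact Hs.
      * intros U x Hs. apply Hf3 in Hs.
        rewrite (getL_spec (f U x) (Hall U x)) in Hs. exact Hs.
    + right. split; [exact Ht|].
      assert (Hall : forall U x, isL (f U x) = false) by (intros; rewrite (Hc U x W x0); exact Hb).
      exists (fun U x => getR (f U x) (Hall U x)). split; [|split].
      * intros U V h x.
        apply getR_eq. rewrite Hf1.
        pose proof (getR_spec (f V x) (Hall V x)) as E.
        set (a := getR (f V x) (Hall V x)) in *. clearbody a.
        rewrite E. reflexivity.
      * intros U x Hs. apply Hf2 in Hs.
        rewrite (getR_spec (f U x) (Hall U x)) in Hs. exact Hs.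
      * intros U x Hs. apply Hf3 in Hs.
        rewrite (getR_spec (f U x) (Hall U x)) in Hs. exact Hs.
  - intros [[Ht [f [Hf1 [Hf2 Hf3]]]] | [Ht [f [Hf1 [Hf2 Hf3]]]]]; split; auto.
    + exists (fun U x => inl (f U x)). split; [|split]; simpl; intros.
      * rewrite Hf1; reflexivity.
      * apply Hf2; auto.
      * apply Hf3; auto.
    + exists (fun U x => inr (f U x)). split; [|split]; simpl; intros.
      * rewrite Hf1; reflexivity.
      * apply Hf2; auto.
      * apply Hf3; auto.
Qed.

Lemma union_reg (Ps : list (Automaton C -> Prop)) :
  (forall P, In P Ps -> exists X, finite_type C X /\ forall G, P G <-> Lang C X G) ->
  exists X, finite_type C X /\ forall G, (exists P, In P Ps /\ P G) <-> Lang C X G.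
Proof.
  induction Ps as [|P Ps IH]; intros H.
  - exists EmptyA. split; [apply EmptyA_ft|]. intros G; split.
    + intros [P [[] _]].
    + intros HL; destruct (EmptyA_lang G HL).
  - destruct (H P (or_introl eq_refl)) as [X [HX HXe]].
    destruct IH as [X' [HX' HX'e]]; [intros Q HQ; apply H; right; exact HQ|].
    exists (SumA X X'). split; [apply SumA_ft; auto|]. intros G.
    rewrite SumA_lang, <- HXe, <- HX'e. split.
    + intros [Q [[<-|HQ] HG]]; [left; exact HG | right; exists Q; auto].
    + intros [HG | [Q [HQ HG]]]; [exists P; split; [left|]; auto | exists Q; split; [right|]; auto].
Qed.

End S.

Theorem lemma11 (C : dCategory) (L : Automaton C -> Prop) :
  is_language C L ->
  (regular C L <->
   (FiniteSet (src_set C L) /\ FiniteSet (tgt_set C L) /\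
    forall U V, src_set C L U -> tgt_set C L V -> regular C (sub_lang C L U V))).
Proof.
  intros [HLt HLd]. split.
  - intros [X [HXf HX]].
    pose proof HXf as [Hp [Hg [[ls Hls] [la Hla]]]].
    split; [|split].
    + exists (map (@projT1 _ _) ls). intros U [G [HG [x Hx]]].
      destruct (proj1 (HX G) HG) as [_ [f [_ [F2 _]]]].
      apply (in_map (@projT1 _ _) ls (existT _ U (f U x))). apply Hls. apply F2; exact Hx.
    + exists (map (@projT1 _ _) la). intros U [G [HG [x Hx]]].
      destruct (proj1 (HX G) HG) as [_ [f [_ [_ F3]]]].
      apply (in_map (@projT1 _ _) la (existT _ U (f U x))). apply Hla. apply F3; exact Hx.
    + intros U V _ _.
      exists (Build_Automaton C (apsh C X) (fun W y => start C X W y /\ W = U)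
                                      (fun W y => accept C X W y /\ W = V)).
      split.
      * split; [exact Hp|split; [exact Hg|split]].
        -- exists ls. intros e [H _]. apply Hls; exact H.
        -- exists la. intros e [H _]. apply Hla; exact H.
      * intros G; split.
        -- intros [HG [[x Hx] [y Hy]]].
           destruct (proj1 (HX G) HG) as [Ht [f [F1 [F2 F3]]]].
           destruct (track_start C G Ht) as [W0 [x0 [_ Hu0]]].
           destruct (track_accept C G Ht) as [W1 [x1 [_ Hu1]]].
           pose proof (Hu0 U x Hx) as EU. pose proof (Hu1 V y Hy) as EV.
           split; [exact Ht|]. exists f. split; [exact F1|split].
           ++ intros W z Hz. split; [apply F2; exact Hz|]. rewrite (Hu0 W z Hz), EU; reflexivity.
           ++ intros W z Hz. split; [apply F3; exact Hz|]. rewrite (Hu1 W z Hz), EV; reflexivity.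
        -- intros [Ht [f [F1 [F2 F3]]]].
           split; [|split].
           ++ apply HX. split; [exact Ht|]. exists f. split; [exact F1|split].
              ** intros W z Hz; apply (proj1 (F2 W z Hz)).
              ** intros W z Hz; apply (proj1 (F3 W z Hz)).
           ++ destruct (track_start C G Ht) as [W0 [x0 [Hs0 _]]].
              destruct (F2 _ _ Hs0) as [_ E]. subst W0. exists x0; exact Hs0.
           ++ destruct (track_accept C G Ht) as [W0 [x0 [Hs0 _]]].
              destruct (F3 _ _ Hs0) as [_ E]. subst W0. exists x0; exact Hs0.
  - intros [[ls Hls] [[lt Hlt] Hreg]].
    set (Ps := map (fun uv : ob C * ob C => fun G =>
                 src_set C L (fst uv) /\ tgt_set C L (snd uv) /\ sub_lang C L (fst uv) (snd uv) G)
               (list_prod ls lt)).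
    destruct (union_reg C Ps) as [X [HXf HX]].
    { intros P HP. apply in_map_iff in HP. destruct HP as [[U V] [<- _]]. simpl.
      destruct (classic (src_set C L U /\ tgt_set C L V)) as [[HU HV] | Hn].
      - destruct (Hreg U V HU HV) as [X [HXf HX]]. exists X. split; [exact HXf|].
        intros G. rewrite <- HX. tauto.
      - exists (EmptyA C). split; [apply EmptyA_ft|]. intros G. split.
        + intros [HU [HV _]]. exfalso; apply Hn; auto.
        + intros HL; destruct (EmptyA_lang C G HL). }
    exists X. split; [exact HXf|]. intros G. rewrite <- HX. split.
    + intros HG. pose proof (HLt G HG) as Ht.
      destruct (track_start C G Ht) as [W0 [x0 [Hs0 _]]].
      destruct (track_accept C G Ht) as [W1 [x1 [Ha1 _]]].
      assert (HU : src_set C L W0) by (exists G; split; [exact HG|exists x0; exact Hs0]).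
      assert (HV : tgt_set C L W1) by (exists G; split; [exact HG|exists x1; exact Ha1]).
      eexists. split.
      * apply in_map. apply (in_prod ls lt W0 W1); [apply Hls | apply Hlt]; assumption.
      * simpl. split; [exact HU|split; [exact HV|]].
        split; [exact HG|split; [exists x0; exact Hs0 | exists x1; exact Ha1]].
    + intros [P [HP HG]]. unfold Ps in HP. apply in_map_iff in HP.
      destruct HP as [uv [<- _]]. destruct HG as [_ [_ [HG _]]]. exact HG.
Qed.
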